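(* Let $d,m$ be positive integers, let $a<b$ be real numbers and $\epsilon>0$, and let $T:\mathrm{MR}_d\to\mathrm{MR}_m$ be an affine linear operator which sends $[a,b]$-rooted polynomials to real-rooted polynomials. Let $\mathcal{A}$ be the set of all $[a,b]$-rooted $f\in\mathrm{MR}_d$ with $\operatorname{tr}(f)=\epsilon$ (assumed nonempty), and consider the problem of maximizing the largest zero of $T(f)$ over $f\in\mathcal{A}$. Then this maximal zero is achieved for some $T(f)$ with $f\in\mathcal{A}$ having at most one distinct zero in $(a,b)$. Moreover, if the maximal zero above is achieved for some $T(f)$ where $f\in\mathcal{A}$ is $(a,b)$-rooted, then the maximal zero is also achieved for $T\big((t-\epsilon/d)^d\big)$.
   Context: $\mathrm{MR}_d$ denotes the affine space of all monic real univariate polynomials of degree $d$. For an interval $I\subseteq\mathbb{R}$, a polynomial is $I$-rooted if all its zeros lie in $I$. The trace $\operatorname{tr}(f)$ of a non-constant polynomial $f$ is the sum of its zeros counted with multiplicity. *)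

(* Defs.v *)
From HB Require Import structures.
From mathcomp Require Import all_boot all_order all_algebra.
From mathcomp Require Import reals.
Set Implicit Arguments. Unset Strict Implicit. Unset Printing Implicit Defensive.
Import Order.TTheory GRing.Theory Num.Theory.
Local Open Scope ring_scope.

Definition MR (R : realType) (d : nat) (p : {poly R}) : Prop :=
  p \is monic /\ size p = d.+1.

Definition rooted_in (R : realType) (I : interval R) (p : {poly R}) : Prop :=
  exists s : seq R, p = \prod_(x <- s) ('X - x%:P) /\ all (fun x => x \in I) s.

Definition real_rooted (R : realType) (p : {poly R}) : Prop :=
  exists s : seq R, p = \prod_(x <- s) ('X - x%:P).

Definition has_trace (R : realType) (p : {poly R}) (t : R) : Prop :=
  exists s : seq R, p = \prod_(x <- s) ('X - x%:P) /\ \sum_(x <- s) x = t.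

Definition affine_op (R : realType) (d m : nat) (T : {poly R} -> {poly R}) : Prop :=
  (forall f, MR d f -> MR m (T f)) /\
  (forall f g (l : R), MR d f -> MR d g ->
     T (l *: f + (1 - l) *: g) = l *: T f + (1 - l) *: T g).

Definition inA (R : realType) (d : nat) (a b eps : R) (f : {poly R}) : Prop :=
  MR d f /\ rooted_in `[a, b] f /\ has_trace f eps.

Definition max_attained_at (R : realType) (d : nat) (a b eps : R)
    (T : {poly R} -> {poly R}) (f0 : {poly R}) : Prop :=
  exists r : R, root (T f0) r /\
    forall f x, inA d a b eps f -> root (T f) x -> x <= r.

(* Main.v *)
Require Import Defs.
From HB Require Import structures.
From mathcomp Require Import all_boot all_order all_algebra.
From mathcomp Require Import reals.
From mathcomp Require Import ring lra.
From Stdlib Require Import Classical.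
Import Order.TTheory GRing.Theory Num.Theory.
Set Implicit Arguments. Unset Strict Implicit. Unset Printing Implicit Defensive.
Local Open Scope ring_scope.


Definition pp (R : realType) (s : seq R) : {poly R} := \prod_(x <- s) ('X - x%:P).

Lemma MR_pp (R : realType) d (s : seq R) : size s = d -> MR d (pp s).
Proof. by move=> <-; split; [exact: monic_prod_XsubC | exact: size_prod_XsubC]. Qed.

Lemma pp_perm (R : realType) (s t : seq R) : perm_eq s t -> pp s = pp t.
Proof. by move=> H; rewrite /pp (perm_big _ H). Qed.

Lemma pp2 (R : realType) (u v : R) h :
  pp [:: u, v & h] = ('X * 'X - (u + v) *: 'X + (u * v)%:P) * pp h.
Proof.
rewrite /pp !big_cons mulrA; congr (_ * _).
rewrite mulrBl !mulrBr -!mul_polyC polyCD polyCM; ring.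
Qed.

Lemma inA_pp (R : realType) d (a b eps : R) s :
  size s = d -> all (fun x => x \in `[a, b]) s -> \sum_(x <- s) x = eps ->
  inA d a b eps (pp s).
Proof.
move=> hs ha he; split; first exact: MR_pp.
by split; exists s.
Qed.

Lemma inA_inv (R : realType) d (a b eps : R) f : inA d a b eps f ->
  exists s, [/\ f = pp s, size s = d, all (fun x => x \in `[a, b]) s & \sum_(x <- s) x = eps].
Proof.
move=> [[_ hsz] [[s [fs ha]] [t [ft te]]]].
exists s; split => //.
  by move: hsz; rewrite fs size_prod_XsubC => -[].
have H : perm_eq s t by apply: prod_XsubC_eq; rewrite -fs -ft.
by rewrite (perm_big _ H).
Qed.

Lemma horner_pp_gt0 (R : realType) (s : seq R) x :
  all (fun y => y < x) s -> 0 < (pp s).[x].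
Proof.
elim: s => [|y s IH] /=; first by rewrite /pp big_nil hornerC ltr01.
move=> /andP[hy hs]; rewrite /pp big_cons hornerM -/(pp s).
by rewrite mulr_gt0 ?IH // hornerXsubC subr_gt0.
Qed.


Lemma split2 (R : realType) (s : seq R) x y : x \in s -> y \in s -> y != x ->
  exists h, perm_eq s [:: x, y & h].
Proof.
move=> hx hy hyx; have hy' : y \in rem x s by exact: rem_mem.
exists (rem y (rem x s)).
apply: perm_trans (perm_to_rem hx) _.
by rewrite perm_cons; apply: perm_to_rem.
Qed.

Lemma Qp_aff (R : realType) (sg l p1 p2 : R) (H : {poly R}) :
  ('X * 'X - sg *: 'X + (l * p1 + (1 - l) * p2)%:P) * H =
  l *: (('X * 'X - sg *: 'X + p1%:P) * H) + (1 - l) *: (('X * 'X - sg *: 'X + p2%:P) * H).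
Proof.
rewrite -!mul_polyC !polyCD !polyCM polyCB polyC1; ring.
Qed.

Lemma T_aff (R : realType) d m (T : {poly R} -> {poly R}) (u0 v0 u1 v1 u2 v2 l : R) h :
  affine_op d m T -> (size h).+2 = d ->
  u0 + v0 = u1 + v1 -> u2 + v2 = u1 + v1 ->
  u0 * v0 = l * (u1 * v1) + (1 - l) * (u2 * v2) ->
  T (pp [:: u0, v0 & h]) = l *: T (pp [:: u1, v1 & h]) + (1 - l) *: T (pp [:: u2, v2 & h]).
Proof.
move=> [_ Haff] hs e0 e2 ep.
have := Haff _ _ l (MR_pp (s:=[:: u1, v1 & h]) hs) (MR_pp (s:=[:: u2, v2 & h]) hs).
by rewrite !pp2 e0 e2 ep Qp_aff.
Qed.

Lemma exists_l (R : realType) (p0 p1 p2 : R) : p1 <= p0 -> p0 <= p2 ->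
  exists l, [/\ 0 <= l, l <= 1 & p0 = l * p1 + (1 - l) * p2].
Proof.
move=> h1 h2; have [e|ne] := eqVneq p1 p2.
  by exists 1; split => //; lra.
have hp : 0 < p2 - p1.
  by rewrite lt_neqAle subr_ge0 (le_trans h1 h2) andbT eq_sym subr_eq0 eq_sym.
exists ((p2 - p0) / (p2 - p1)); split.
- by apply: divr_ge0; lra.
- by rewrite ler_pdivrMr // mul1r; lra.
- by field; rewrite gt_eqF.
Qed.


Definition dom (R : realType) (T : {poly R} -> {poly R}) f g :=
  forall x, root (T f) x -> exists y, root (T g) y /\ x <= y.

Lemma dom_trans (R : realType) (T : {poly R} -> {poly R}) f g h :
  dom T f g -> dom T g h -> dom T f h.
Proof.
move=> H1 H2 x /H1 [y [ry xy]]; have [z [rz yz]] := H2 y ry.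
by exists z; split => //; apply: le_trans yz.
Qed.

Lemma quasi0 (R : realType) (t1 t2 : seq R) l x :
  0 <= l -> l <= 1 -> root (l *: pp t1 + (1 - l) *: pp t2) x ->
  has (fun y => x <= y) t1 || has (fun y => x <= y) t2.
Proof.
move=> l0 l1 hr; apply/negPn/negP; rewrite negb_or => /andP[/hasPn H1 /hasPn H2].
have g1 : 0 < (pp t1).[x].
  by apply: horner_pp_gt0; apply/allP => y /H1; rewrite -ltNge.
have g2 : 0 < (pp t2).[x].
  by apply: horner_pp_gt0; apply/allP => y /H2; rewrite -ltNge.
move: hr; rewrite rootE hornerD !hornerZ => /eqP.
set p := (pp t1).[x]; set q := (pp t2).[x] => e.
have : 0 < l * p + (1 - l) * q.
  have [->|lp] := eqVneq l 0; first by rewrite mul0r add0r subr0 mul1r.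
  have : 0 < l by rewrite lt_neqAle eq_sym lp.
  move=> lpos; apply: ltr_pwDl; first exact: mulr_gt0.
  by apply: mulr_ge0 => //; [lra | exact: ltW].
by rewrite e ltxx.
Qed.

Lemma root_pp_le (R : realType) (t : seq R) x :
  has (fun y => x <= y) t -> exists y, root (pp t) y /\ x <= y.
Proof.
by move=> /hasP [y yt xy]; exists y; rewrite /pp root_prod_XsubC.
Qed.

Definition Hyp (R : realType) d m (a b : R) (T : {poly R} -> {poly R}) :=
  affine_op d m T /\ (forall f, MR d f -> rooted_in `[a, b] f -> real_rooted (T f)).

Definition inI (R : realType) (a b : R) (s : seq R) := all (fun x => x \in `[a, b]) s.

Lemma rr_pp (R : realType) d m (a b : R) T s : Hyp d m a b T ->
  size s = d -> inI a b s -> exists t, T (pp s) = pp t.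
Proof.
move=> [_ H] hs ha; have [t ht] := H (pp s) (MR_pp hs) (ex_intro _ s (conj erefl ha)).
by exists t.
Qed.

Lemma quasi (R : realType) d m (a b : R) T (u0 v0 u1 v1 u2 v2 l : R) h x :
  Hyp d m a b T -> (size h).+2 = d ->
  inI a b [:: u1, v1 & h] -> inI a b [:: u2, v2 & h] ->
  u0 + v0 = u1 + v1 -> u2 + v2 = u1 + v1 ->
  u0 * v0 = l * (u1 * v1) + (1 - l) * (u2 * v2) -> 0 <= l -> l <= 1 ->
  root (T (pp [:: u0, v0 & h])) x ->
  (exists y, root (T (pp [:: u1, v1 & h])) y /\ x <= y) \/
  (exists y, root (T (pp [:: u2, v2 & h])) y /\ x <= y).
Proof.
move=> HH hs i1 i2 e0 e2 ep l0 l1.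
rewrite (T_aff (proj1 HH) hs e0 e2 ep).
have [t1 ->] := rr_pp (s:=[:: u1, v1 & h]) HH hs i1.
have [t2 ->] := rr_pp (s:=[:: u2, v2 & h]) HH hs i2.
move=> /(quasi0 l0 l1) /orP [H|H]; [left|right]; exact: root_pp_le.
Qed.

Lemma quasi_dom (R : realType) d m (a b : R) T (u0 v0 u1 v1 u2 v2 : R) h g :
  Hyp d m a b T -> (size h).+2 = d ->
  inI a b [:: u1, v1 & h] -> inI a b [:: u2, v2 & h] ->
  u0 + v0 = u1 + v1 -> u2 + v2 = u1 + v1 ->
  u1 * v1 <= u0 * v0 -> u0 * v0 <= u2 * v2 ->
  dom T (pp [:: u1, v1 & h]) g -> dom T (pp [:: u2, v2 & h]) g ->
  dom T (pp [:: u0, v0 & h]) g.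
Proof.
move=> HH hs i1 i2 e0 e2 p1 p2 D1 D2 x hx.
have [l [l0 l1 ep]] := exists_l p1 p2.
have [[y [ry xy]]|[y [ry xy]]] := quasi HH hs i1 i2 e0 e2 ep l0 l1 hx.
  have [z [rz yz]] := D1 y ry; exists z; split => //; exact: le_trans yz.
have [z [rz yz]] := D2 y ry; exists z; split => //; exact: le_trans yz.
Qed.


Lemma sum_ge (R : realType) (s : seq R) mu :
  (forall x, x \in s -> mu <= x) -> (size s)%:R * mu <= \sum_(x <- s) x.
Proof.
elim: s => [|y s IH] H; first by rewrite big_nil mul0r.
rewrite big_cons /= -addn1 natrD.
have h1 := H y (mem_head _ _).
have h2 := IH (fun x hx => H x (mem_behead (s:=y::s) hx)).
lra.
Qed.

Lemma sum_le (R : realType) (s : seq R) mu :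
  (forall x, x \in s -> x <= mu) -> \sum_(x <- s) x <= (size s)%:R * mu.
Proof.
elim: s => [|y s IH] H; first by rewrite big_nil mul0r.
rewrite big_cons /= -addn1 natrD.
have h1 := H y (mem_head _ _).
have h2 := IH (fun x hx => H x (mem_behead (s:=y::s) hx)).
lra.
Qed.

Lemma sum_gt (R : realType) (s : seq R) mu :
  (forall x, x \in s -> mu <= x) -> (exists2 x, x \in s & mu < x) ->
  (size s)%:R * mu < \sum_(x <- s) x.
Proof.
elim: s => [|y s IH] H [z]; first by rewrite in_nil.
rewrite big_cons /= -addn1 natrD inE => /orP [/eqP -> hz|zs hz].
  have h2 := sum_ge (fun x hx => H x (mem_behead (s:=y::s) hx)); lra.
have h1 := H y (mem_head _ _).
have h2 := IH (fun x hx => H x (mem_behead (s:=y::s) hx)) (ex_intro2 _ _ z zs hz).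
lra.
Qed.

Lemma sum_lt (R : realType) (s : seq R) mu :
  (forall x, x \in s -> x <= mu) -> (exists2 x, x \in s & x < mu) ->
  \sum_(x <- s) x < (size s)%:R * mu.
Proof.
elim: s => [|y s IH] H [z]; first by rewrite in_nil.
rewrite big_cons /= -addn1 natrD inE => /orP [/eqP -> hz|zs hz].
  have h2 := sum_le (fun x hx => H x (mem_behead (s:=y::s) hx)); lra.
have h1 := H y (mem_head _ _).
have h2 := IH (fun x hx => H x (mem_behead (s:=y::s) hx)) (ex_intro2 _ _ z zs hz).
lra.
Qed.

Lemma mean_split (R : realType) (s : seq R) mu :
  \sum_(x <- s) x = (size s)%:R * mu -> (exists2 x, x \in s & x != mu) ->
  exists x1 xN, [/\ x1 \in s, xN \in s, x1 < mu & mu < xN].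
Proof.
move=> hsum [z zs zmu].
have ex1 : exists2 x1, x1 \in s & x1 < mu.
  case: (boolP (has (fun x => x < mu) s)) => [/hasP[x ? ?]|/hasPn H]; first by exists x.
  have H' : forall x, x \in s -> mu <= x by move=> x /H; rewrite -leNgt.
  have : (size s)%:R * mu < \sum_(x <- s) x.
    apply: sum_gt => //; exists z => //; rewrite lt_neqAle eq_sym zmu; exact: H'.
  by rewrite hsum ltxx.
have exN : exists2 xN, xN \in s & mu < xN.
  case: (boolP (has (fun x => mu < x) s)) => [/hasP[x ? ?]|/hasPn H]; first by exists x.
  have H' : forall x, x \in s -> x <= mu by move=> x /H; rewrite -leNgt.
  have : \sum_(x <- s) x < (size s)%:R * mu.
    apply: sum_lt => //; exists z => //; rewrite lt_neqAle zmu; exact: H'.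
  by rewrite hsum ltxx.
case: ex1 => x1 h1 h1'; case: exN => xN hN hN'.
by exists x1, xN.
Qed.


Lemma oo_cc (R : realType) (a b x : R) : x \in `]a, b[ -> x \in `[a, b].
Proof. by rewrite !in_itv /= => /andP[h1 h2]; rewrite !ltW. Qed.

Lemma red2 (R : realType) d m (a b eps : R) T r :
  Hyp d m a b T -> (0 < d)%N ->
  (forall f x, inA d a b eps f -> root (T f) x -> x <= r) ->
  forall k s, size s = d -> all (fun x => x \in `]a, b[) s -> \sum_(x <- s) x = eps ->
  (count (fun x => x != eps / d%:R) s <= k)%N -> root (T (pp s)) r ->
  root (T (pp (nseq d (eps / d%:R)))) r.
Proof.
move=> HH d0 Hmax; set mu := eps / d%:R.
have dn0 : d%:R != 0 :> R by rewrite pnatr_eq0 -lt0n.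
elim=> [|k IH] s hs hI hsum hk hr.
all: case: (boolP (all (pred1 mu) s)) => [/all_pred1P|/allPn [z zs zmu]];
  first by rewrite hs => <-.
  by move: hk; rewrite leqNgt -has_count => /hasPn /(_ z zs); rewrite /= zmu.
have [x1 [xN [h1 hN x1mu muxN]]] : exists x1 xN, [/\ x1 \in s, xN \in s, x1 < mu & mu < xN].
  apply: mean_split => //; last by exists z.
  by rewrite hsum hs /mu; field.
have [h hp] := split2 h1 hN (negbT (gt_eqF (lt_trans x1mu muxN))).
have hsh : (size h).+2 = d by rewrite -hs (perm_size hp).
have hI' : all (fun x => x \in `]a, b[) [:: x1, xN & h] by rewrite -(perm_all _ hp).
have hsum' : x1 + (xN + \sum_(x <- h) x) = eps by rewrite -hsum (perm_big _ hp) !big_cons.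
move: hI' => /= /and3P [i1 iN ih].
move: (i1) (iN); rewrite !in_itv /= => /andP[a1 b1] /andP[aN bN].
have [t [t0 ta tb]] : exists t, [/\ 0 < t, a < x1 - t & xN + t < b].
  case: (lerP (x1 - a) (b - xN)) => H.
    by exists ((x1 - a) / 2); split; lra.
  by exists ((b - xN) / 2); split; lra.
have ih' : all (fun x => x \in `[a, b]) h by apply/allP => x /(allP ih) /oo_cc.
have ih2 : all (fun x => x \in `]a, b[) [:: mu, x1 + xN - mu & h].
  by rewrite /= ih !in_itv /= andbT; repeat (apply/andP; split); lra.
have I1 : inI a b [:: x1 - t, xN + t & h].
  by rewrite /inI /= ih' !in_itv /= andbT; repeat (apply/andP; split); lra.
have I2 : inI a b [:: mu, x1 + xN - mu & h].
  by apply/allP => x /(allP ih2) /oo_cc.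
have A1 : inA d a b eps (pp [:: x1 - t, xN + t & h]).
  by apply: inA_pp => //; rewrite !big_cons; lra.
have A2 : inA d a b eps (pp [:: mu, x1 + xN - mu & h]).
  by apply: inA_pp => //; rewrite !big_cons; lra.
have hr' : root (T (pp [:: x1, xN & h])) r by rewrite -(pp_perm hp).
have p1 : (x1 - t) * (xN + t) < x1 * xN by nra.
have p2 : x1 * xN <= mu * (x1 + xN - mu) by nra.
have [l [l0 l1 ep]] := exists_l (ltW p1) p2.
have e0 : x1 + xN = x1 - t + (xN + t) by ring.
have e2 : mu + (x1 + xN - mu) = x1 - t + (xN + t) by ring.
have r2 : root (T (pp [:: mu, x1 + xN - mu & h])) r.
  have [[y [ry ry']]|[y [ry ry']]] := quasi HH hsh I1 I2 e0 e2 ep l0 l1 hr'.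
    have yr := Hmax _ _ A1 ry.
    have ery : y = r by apply/eqP; rewrite eq_le yr ry'.
    rewrite ery in ry.
    have e0' : x1 - t + (xN + t) = mu + (x1 + xN - mu) by ring.
    have e2' : x1 + xN = mu + (x1 + xN - mu) by ring.
    set be := (mu * (x1 + xN - mu) - x1 * xN) / ((x1 - t) * (xN + t) - x1 * xN).
    have ep' : mu * (x1 + xN - mu) = be * ((x1 - t) * (xN + t)) + (1 - be) * (x1 * xN).
      by rewrite /be; field; rewrite subr_eq0 lt_eqF.
    have := T_aff (proj1 HH) hsh e2 e0 ep'.
    move=> ->; move: ry hr'; rewrite !rootE !hornerD !hornerZ => /eqP -> /eqP ->.
    by rewrite !mulr0 addr0.
  have yr := Hmax _ _ A2 ry.
  have ery : y = r by apply/eqP; rewrite eq_le yr ry'.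
  by rewrite -ery.
apply: (IH [:: mu, x1 + xN - mu & h]) => //.
- by rewrite !big_cons; lra.
- move: hk; rewrite (permP hp) /= (lt_eqF x1mu) (gt_eqF muxN) eqxx /=.
  by rewrite add0n add1n addSn ltnS; case: (_ != mu); rewrite ?add0n ?add1n // => /ltnW.
Qed.


Definition intr (R : realType) (a b : R) := fun x : R => (a < x) && (x < b).

Definition Base (R : realType) d (a b eps : R) T g :=
  forall s, size s = d -> inI a b s -> \sum_(x <- s) x = eps ->
  (forall x y, x \in s -> y \in s -> intr a b x -> intr a b y -> x = y) ->
  dom T (pp s) g.

Lemma red1_inner (R : realType) d m (a b eps : R) T g (N : nat) (S : R) :
  Hyp d m a b T -> Base d a b eps T g ->
  (forall s, size s = d -> inI a b s -> \sum_(x <- s) x = eps ->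
     (count (intr a b) s < N)%N -> dom T (pp s) g) ->
  forall k s, size s = d -> inI a b s -> \sum_(x <- s) x = eps ->
  count (intr a b) s = N -> \sum_(x <- s | intr a b x) x = S ->
  (count (fun x => intr a b x && (x != S / N%:R)) s <= k)%N -> dom T (pp s) g.
Proof.
move=> HH HB IHo; set mu := S / N%:R.
elim=> [|k IH] s hs hI hsum hN hS hk;
  (case: (boolP (has (fun x => intr a b x && (x != mu)) s)) => [hbad|/hasPn hgood];
   [ | apply: HB => // x y xs ys ix iy; move: (hgood x xs) (hgood y ys);
       rewrite /= ix iy /= !negbK => /eqP -> /eqP -> //]).
  by move: hk; rewrite leqNgt -has_count hbad.
move: (hbad) => /hasP [z zs /andP [iz zmu]].
have Npos : (0 < N)%N by rewrite -hN -has_count; apply/hasP; exists z.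
have NR : N%:R != 0 :> R by rewrite pnatr_eq0 -lt0n.
have [x1 [xN [h1 hN1 x1mu muxN]]] :
    exists x1 xN, [/\ x1 \in filter (intr a b) s, xN \in filter (intr a b) s, x1 < mu & mu < xN].
  apply: mean_split.
    by rewrite big_filter hS size_filter hN /mu; field.
  by exists z; rewrite // mem_filter iz zs.
move: h1 hN1; rewrite !mem_filter => /andP [i1 h1] /andP [iN hN1].
have [h hp] := split2 h1 hN1 (negbT (gt_eqF (lt_trans x1mu muxN))).
have hsh : (size h).+2 = d by rewrite -hs (perm_size hp).
have hI' : inI a b [:: x1, xN & h] by rewrite /inI -(perm_all _ hp).
have hsum' : x1 + (xN + \sum_(x <- h) x) = eps by rewrite -hsum (perm_big _ hp) !big_cons.
have hS' : x1 + (xN + \sum_(x <- h | intr a b x) x) = S.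
  by rewrite -hS (perm_big _ hp) !big_cons i1 iN.
have hN' : (count (intr a b) h).+2 = N by rewrite -hN (permP hp) /= i1 iN.
move: hI'; rewrite /inI /= => /and3P [_ _ ih].
move: (i1) (iN); rewrite /intr => /andP[a1 b1] /andP[aN bN].
have [t [t0 ta tb tc]] : exists t, [/\ 0 <= t, a <= x1 - t, xN + t <= b &
     (x1 - t == a) || (xN + t == b)].
  case: (lerP (x1 - a) (b - xN)) => H.
    exists (x1 - a); split; [lra|lra|lra|]; apply/orP; left; apply/eqP; ring.
  exists (b - xN); split; [lra|lra|lra|]; apply/orP; right; apply/eqP; ring.
have I1 : inI a b [:: x1 - t, xN + t & h].
  by rewrite /inI /= ih !in_itv /= andbT; repeat (apply/andP; split); lra.
have I2 : inI a b [:: mu, x1 + xN - mu & h].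
  by rewrite /inI /= ih !in_itv /= andbT; repeat (apply/andP; split); lra.
have e0 : x1 + xN = x1 - t + (xN + t) by ring.
have e2 : mu + (x1 + xN - mu) = x1 - t + (xN + t) by ring.
have p1 : (x1 - t) * (xN + t) <= x1 * xN by nra.
have p2 : x1 * xN <= mu * (x1 + xN - mu) by nra.
have im : intr a b mu by rewrite /intr; apply/andP; split; lra.
have iv : intr a b (x1 + xN - mu) by rewrite /intr; apply/andP; split; lra.
rewrite (pp_perm hp).
apply: (quasi_dom HH hsh I1 I2 e0 e2 p1 p2).
- apply: IHo => //.
  + by rewrite !big_cons; lra.
  + rewrite -hN' /=.
    case/orP: tc => /eqP ->; rewrite /intr ltxx /= ?andbF ?add0n ltnS;
      exact: leq_add (leq_b1 _) (leqnn _).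
- apply: (IH [:: mu, x1 + xN - mu & h]) => //.
  + by rewrite !big_cons; lra.
  + by rewrite /= im iv -hN'.
  + by rewrite !big_cons im iv -hS'; lra.
  + move: hk; rewrite (permP hp) /= i1 iN (lt_eqF x1mu) (gt_eqF muxN) im iv eqxx /= => hk.
    rewrite add0n; apply: leq_trans (leq_add (leq_b1 _) (leqnn _)) _.
    by rewrite add1n -ltnS -add1n.
Qed.

Lemma red1 (R : realType) d m (a b eps : R) T g :
  Hyp d m a b T -> Base d a b eps T g ->
  forall n s, size s = d -> inI a b s -> \sum_(x <- s) x = eps ->
  (count (intr a b) s <= n)%N -> dom T (pp s) g.
Proof.
move=> HH HB; elim=> [|n IH] s hs hI hsum hc;
  apply: (red1_inner HH HB _ hs hI hsum erefl erefl (leqnn _)).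
  by move=> s' _ _ _; rewrite ltnNge (leq_trans hc (leq0n _)).
move=> s' hs' hI' hsum' hc'; apply: IH => //.
by rewrite -ltnS (leq_trans hc' hc).
Qed.


Lemma pp_cat (R : realType) (s t : seq R) : pp (s ++ t) = pp s * pp t.
Proof. by rewrite /pp big_cat. Qed.

Lemma pp_nseq (R : realType) n (x : R) : pp (nseq n x) = ('X - x%:P) ^+ n.
Proof.
elim: n => [|n IH]; first by rewrite /pp big_nil expr0.
by rewrite /= /pp big_cons -/(pp _) IH exprS.
Qed.

Lemma decomp (R : realType) (a b c : R) s : a < b -> inI a b s ->
  (forall x, x \in s -> intr a b x -> x = c) ->
  [/\ pp s = ('X - a%:P) ^+ count (pred1 a) s * ('X - b%:P) ^+ count (pred1 b) s
              * ('X - c%:P) ^+ count (intr a b) s,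
      \sum_(x <- s) x = (count (pred1 a) s)%:R * a + (count (pred1 b) s)%:R * b
              + (count (intr a b) s)%:R * c &
      (count (pred1 a) s + count (pred1 b) s + count (intr a b) s = size s)%N].
Proof.
move=> ab; elim: s => [|x s IH] /=.
  by move=> _ _; rewrite /pp big_nil big_nil !expr0 !mulr1 !mul0r !addr0.
move=> /andP [hx hs] Hc.
have Hc' : forall y, y \in s -> intr a b y -> y = c.
  by move=> y ys; apply: Hc; rewrite inE ys orbT.
have [e1 e2 e3] := IH hs Hc'.
rewrite /pp big_cons -/(pp s) big_cons e1 e2.
move: hx; rewrite in_itv /= => /andP [ax xb].
have [xa|xna] := eqVneq x a.
  subst x; rewrite ?eqxx ?(lt_eqF ab) /intr ltxx /= !add0n add1n.
  rewrite exprS -nat1r -e3.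
  split; [ring | ring | by rewrite !addSn].
have [xb'|xnb] := eqVneq x b.
  subst x; rewrite ?eqxx ?(gt_eqF ab) /intr ltxx andbF /= !add0n add1n.
  rewrite exprS -nat1r -e3.
  split; [ring | ring | by rewrite addnS addSn].
have ix : intr a b x.
  by rewrite /intr; apply/andP; split; rewrite lt_neqAle ?ax ?xb ?andbT // eq_sym.
rewrite ix /= ?(negbTE xna) ?(negbTE xnb) !add0n add1n (Hc x (mem_head _ _) ix).
rewrite exprS -nat1r -e3.
split; [ring | ring | by rewrite !addnS].
Qed.


Lemma seq_max (R : realType) (t : seq R) : t != [::] ->
  exists2 y, y \in t & forall z, z \in t -> z <= y.
Proof.
elim: t => [|x t IH] // _.
case: (eqVneq t [::]) => [->|tn].
  by exists x; rewrite ?mem_head // => z; rewrite inE => /eqP ->.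
have [y yt Hy] := IH tn.
case: (lerP x y) => hxy.
  exists y; first by rewrite inE yt orbT.
  by move=> z; rewrite inE => /orP [/eqP ->|/Hy].
exists x; first exact: mem_head.
move=> z; rewrite inE => /orP [/eqP ->|/Hy hz] //; exact: le_trans hz (ltW hxy).
Qed.

Lemma lam_ex (R : realType) d m (a b eps : R) T f : Hyp d m a b T -> (0 < m)%N ->
  inA d a b eps f -> exists y, root (T f) y /\ forall x, root (T f) x -> x <= y.
Proof.
move=> [[HM _] Hr] m0 [hMR [hroot _]].
have [t ht] := Hr f hMR hroot.
have [_ hsz] := HM f hMR.
have tn : t != [::].
  by apply/eqP => t0; move: hsz; rewrite ht t0 /pp big_nil size_poly1 => -[] m0'; rewrite -m0' in m0.
have [y yt Hy] := seq_max tn.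
exists y; rewrite ht /pp; split; first by rewrite root_prod_XsubC.
by move=> x; rewrite root_prod_XsubC => /Hy.
Qed.

Lemma dom_total (R : realType) d m (a b eps : R) T f g : Hyp d m a b T -> (0 < m)%N ->
  inA d a b eps f -> inA d a b eps g -> dom T f g \/ dom T g f.
Proof.
move=> HH m0 hf hg.
have [yf [rf Hf]] := lam_ex HH m0 hf; have [yg [rg Hg]] := lam_ex HH m0 hg.
case: (lerP yf yg) => h; [left|right] => x hx.
  by exists yg; split => //; apply: le_trans h; apply: Hf.
by exists yf; split => //; apply: le_trans (ltW h); apply: Hg.
Qed.

Lemma dom_refl (R : realType) (T : {poly R} -> {poly R}) f : dom T f f.
Proof. by move=> x hx; exists x. Qed.

Lemma best (R : realType) (T : {poly R} -> {poly R}) (K : eqType) (L : seq K)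
  (P : K -> Prop) (Fk : K -> {poly R}) :
  (forall k k', P k -> P k' -> dom T (Fk k) (Fk k') \/ dom T (Fk k') (Fk k)) ->
  (exists k, k \in L /\ P k) ->
  exists k, [/\ k \in L, P k & forall k', k' \in L -> P k' -> dom T (Fk k') (Fk k)].
Proof.
move=> Htot; elim: L => [|k0 L IH]; first by case=> k; rewrite in_nil => -[].
move=> Hex.
case: (classic (exists k, k \in L /\ P k)) => [/IH [kb [kbL Pkb Hkb]]|Hno].
  case: (classic (P k0)) => [P0|nP0].
    case: (Htot k0 kb P0 Pkb) => D.
      exists kb; split; first by rewrite inE kbL orbT.
        by [].
      by move=> k'; rewrite inE => /orP [/eqP -> //|/Hkb]; apply.
    exists k0; split; [exact: mem_head | by [] |].
    move=> k'; rewrite inE => /orP [/eqP -> _|k'L Pk']; first exact: dom_refl.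
    exact: dom_trans (Hkb _ k'L Pk') D.
  exists kb; split; first by rewrite inE kbL orbT.
    by [].
  by move=> k'; rewrite inE => /orP [/eqP -> //|/Hkb].
have P0 : P k0.
  case: Hex => k; rewrite inE => -[/orP [/eqP -> //|kL] Pk].
  by exfalso; apply: Hno; exists k.
exists k0; split; [exact: mem_head | by [] |].
move=> k'; rewrite inE => /orP [/eqP -> _|k'L Pk']; first exact: dom_refl.
by exfalso; apply: Hno; exists k'.
Qed.


Definition cc (R : realType) d (a b eps : R) (i j : nat) : R :=
  (eps - i%:R * a - j%:R * b) / (d - i - j)%:R.

Definition cand (R : realType) d (a b eps : R) (k : nat * nat) : {poly R} :=
  pp (nseq k.1 a ++ nseq k.2 b ++ nseq (d - k.1 - k.2) (cc d a b eps k.1 k.2)).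

Definition Lc d := [seq (i, j) | i <- iota 0 d.+1, j <- iota 0 d.+1].

Lemma base_cand (R : realType) d (a b eps : R) s : a < b ->
  size s = d -> inI a b s -> \sum_(x <- s) x = eps ->
  (forall x y, x \in s -> y \in s -> intr a b x -> intr a b y -> x = y) ->
  exists k, k \in Lc d /\ pp s = cand d a b eps k.
Proof.
move=> ab hs hI hsum Hall.
set i := count (pred1 a) s; set j := count (pred1 b) s; set n := count (intr a b) s.
have gen : forall c, (forall x, x \in s -> intr a b x -> x = c) ->
    (n = 0%N \/ c = cc d a b eps i j) ->
    exists k, k \in Lc d /\ pp s = cand d a b eps k.
  move=> c Hc Hor; have [e1 e2 e3] := decomp ab hI Hc.
  have hn : (d - i - j = n)%N by rewrite -hs -e3 -subnDA addKn.
  exists (i, j); split.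
    apply: allpairs_f; rewrite mem_iota /= add0n ltnS -hs -e3.
      by rewrite /i -addnA leq_addr.
    by rewrite /j addnAC leq_addl.
  rewrite e1 /cand /= !pp_cat !pp_nseq hn mulrA.
  case: Hor => [n0|<-] //.
  by move: n0; rewrite /n => ->; rewrite !expr0.
case: (boolP (has (intr a b) s)) => [/hasP [x0 x0s ix0] | /hasPn hno].
  have Hc : forall x, x \in s -> intr a b x -> x = x0.
    by move=> x xs ix; apply: Hall.
  apply: (gen x0 Hc); right.
  have [_ e2 e3] := decomp ab hI Hc.
  have hn : (d - i - j = n)%N by rewrite -hs -e3 -subnDA addKn.
  have n0 : (0 < n)%N by rewrite /n -has_count; apply/hasP; exists x0.
  have nR : n%:R != 0 :> R by rewrite pnatr_eq0 -lt0n.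
  rewrite /cc hn -hsum e2 -/i -/j -/n; field => //.
apply: (gen (cc d a b eps i j)); first by move=> x /hno; rewrite /= => /negbTE ->.
left; apply/eqP; rewrite /n -leqn0 leqNgt -has_count; apply/hasPn => x /hno //.
Qed.


Lemma sum_nseq (R : realType) n (v : R) : \sum_(x <- nseq n v) x = n%:R * v.
Proof.
elim: n => [|n IH]; first by rewrite big_nil mul0r.
by rewrite /= big_cons IH -nat1r; ring.
Qed.

Lemma exists_cand (R : realType) d (a b eps : R) : (0 < d)%N -> a < b ->
  (exists f, inA d a b eps f) ->
  exists k, k \in Lc d /\ inA d a b eps (cand d a b eps k).
Proof.
move=> d0 ab [f /inA_inv [s [_ hs hI hsum]]].
have dR : 0 < d%:R :> R by rewrite ltr0n.
have lo : d%:R * a <= eps.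
  rewrite -hsum -hs; apply: sum_ge => x /(allP hI); rewrite in_itv /= => /andP[] //.
have hi : eps <= d%:R * b.
  rewrite -hsum -hs; apply: sum_le => x /(allP hI); rewrite in_itv /= => /andP[] //.
set mu := eps / d%:R.
have amu : a <= mu by rewrite /mu ler_pdivlMr // mulrC.
have mub : mu <= b by rewrite /mu ler_pdivrMr // mulrC.
have hs0 : size (nseq d mu) = d by rewrite size_nseq.
have hI0 : inI a b (nseq d mu).
  by apply/allP => x; rewrite mem_nseq => /andP [_ /eqP ->]; rewrite in_itv /= amu mub.
have hsum0 : \sum_(x <- nseq d mu) x = eps.
  by rewrite sum_nseq /mu; field; rewrite gt_eqF.
have Hall0 : forall x y, x \in nseq d mu -> y \in nseq d mu ->
    intr a b x -> intr a b y -> x = y.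
  by move=> x y; rewrite !mem_nseq => /andP [_ /eqP ->] /andP [_ /eqP ->].
have [k [kL ek]] := base_cand ab hs0 hI0 hsum0 Hall0.
exists k; split => //; rewrite -ek; exact: inA_pp.
Qed.


Unset Implicit Arguments.

Theorem lemma6p9 (R : realType) (d m : nat) (a b eps : R)
    (T : {poly R} -> {poly R}) :
  (0 < d)%N -> (0 < m)%N -> a < b -> 0 < eps ->
  affine_op d m T ->
  (forall f, MR d f -> rooted_in `[a, b] f -> real_rooted (T f)) ->
  (exists f, inA d a b eps f) ->
  (exists f0, inA d a b eps f0 /\ max_attained_at d a b eps T f0 /\
     (forall x y, a < x < b -> a < y < b -> root f0 x -> root f0 y -> x = y))
  /\
  ((exists f1, inA d a b eps f1 /\ rooted_in `]a, b[ f1 /\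
               max_attained_at d a b eps T f1) ->
   max_attained_at d a b eps T (('X - (eps / d%:R)%:P) ^+ d)).
Proof.
move=> d0 m0 ab e0 Haff Hrr Hex.
have HH : Hyp d m a b T by split.
split.
  have Hex' := exists_cand d0 ab Hex.
  have [kb [kbL Pkb Hkb]] := best (T := T) (P := fun k => inA d a b eps (cand d a b eps k))
     (Fk := cand d a b eps) (fun k k' Pk Pk' => dom_total HH m0 Pk Pk') Hex'.
  exists (cand d a b eps kb); split => //; split.
    have [r [hr Hr]] := lam_ex HH m0 Pkb.
    exists r; split => // f x /inA_inv [s [-> hs hI hsum]] hx.
    have HB : Base d a b eps T (cand d a b eps kb).
      move=> s' hs' hI' hsum' Hall'.
      have [k [kL ek]] := base_cand ab hs' hI' hsum' Hall'.
      rewrite ek; apply: Hkb => //; rewrite -ek; exact: inA_pp.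
    have [y [ry xy]] := red1 HH HB hs hI hsum (leqnn _) hx.
    exact: le_trans xy (Hr y ry).
  move=> x y ix iy; rewrite /cand /pp !root_prod_XsubC !mem_cat !mem_nseq.
  have Hc : forall z, a < z < b ->
      ((0 < kb.1)%N && (z == a)) || (((0 < kb.2)%N && (z == b)) ||
       ((0 < d - kb.1 - kb.2)%N && (z == cc d a b eps kb.1 kb.2))) ->
      z = cc d a b eps kb.1 kb.2.
    move=> z /andP [az zb] /orP [/andP [_ /eqP za]|/orP [/andP [_ /eqP zb']|/andP [_ /eqP //]]].
      by rewrite za ltxx in az.
    by rewrite zb' ltxx in zb.
  by move=> /(Hc x ix) -> /(Hc y iy) ->.
move=> [f1 [hf1 [[s' [e' hs']] [r [hr Hmax]]]]].
have [s [es hs hI hsum]] := inA_inv hf1.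
have hp : perm_eq s' s by apply: prod_XsubC_eq; rewrite -e' es.
have hint : all (fun x => x \in `]a, b[) s by rewrite -(perm_all _ hp).
have hr' : root (T (pp s)) r by rewrite -es.
have := red2 HH d0 Hmax hs hint hsum (leqnn _) hr'.
by rewrite pp_nseq => H; exists r.
Qed.
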